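(* Let $\Gamma$ be a simple, undirected, connected graph with $p\ge 2$ vertices and diameter $\mathrm{diam}(\Gamma)$. Then $$\gamma_{[3R]}(\Gamma)\le 3p-\frac{5\,\mathrm{diam}(\Gamma)}{3}+\frac{7}{3}.$$
   Context: The diameter is the maximum distance between two vertices. For a graph $\Gamma=(V,E)$ and $h:V\to\{0,1,2,3,4\}$, let $AN(v)=\{w\in N(v):h(w)\ge 1\}$, $AN[v]=AN(v)\cup\{v\}$ and $h(S)=\sum_{u\in S}h(u)$. $h$ is a triple Roman dominating function (3RDF) if every $v$ with $h(v)<3$ satisfies $h(AN[v])\ge|AN(v)|+3$. The triple Roman domination number $\gamma_{[3R]}(\Gamma)$ is the minimum weight $h(V)$ of a 3RDF of $\Gamma$. *)

(* Defs.v *)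
From mathcomp Require Import all_boot all_order.
Set Implicit Arguments. Unset Strict Implicit. Unset Printing Implicit Defensive.

Section Graph.
Variables (T : finType) (e : rel T).

Definition simple_graph := symmetric e /\ irreflexive e.
Definition connected_graph := forall x y : T, connect e x y.

Definition has_walk (n : nat) (x y : T) : bool :=
  [exists s : n.-tuple T, path e x s && (last x s == y)].

(* distance: least n with an n-edge walk (shortest walk = shortest path);
   defaults to #|T| if none exists (never happens for connected graphs) *)
Definition dist (x y : T) : nat := find (fun n => has_walk n x y) (iota 0 #|T|).

Definition diam : nat := \max_(x : T) \max_(y : T) dist x y.

Definition AN (h : {ffun T -> 'I_5}) (v : T) : {set T} :=
  [set w | e v w && (1 <= h w)].

Definition is3RDF (h : {ffun T -> 'I_5}) : bool :=
  [forall v, (h v < 3) ==>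
     (h v + \sum_(w in AN h v) (h w : nat) >= #|AN h v| + 3)].

Definition weight (h : {ffun T -> 'I_5}) : nat := \sum_(v : T) (h v : nat).

(* minimum weight of a 3RDF (the constant-4 function is always a 3RDF of
   weight 4|V|, so the default 4*#|T| does not affect the minimum) *)
Definition gamma3R : nat :=
  \big[minn/(4 * #|T|)%N]_(h : {ffun T -> 'I_5} | is3RDF h) weight h.

End Graph.

(* Main.v *)
Require Import Defs.
From mathcomp Require Import all_boot all_order.
From mathcomp Require Import zify.
Set Implicit Arguments. Unset Strict Implicit.

Section P.
Variables (T : finType) (e : rel T).

Fixpoint fblk (L : seq T) (v : T) : nat :=
  match L with
  | x :: y :: z :: r => if v == y then 4 else if (v == x) || (v == z) then 0 else fblk r v
  | _ => 3
  end.

Lemma blk_ind (P : seq T -> Prop) :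
  (forall L, size L < 3 -> P L) ->
  (forall x y z r, P r -> P [:: x, y, z & r]) -> forall L, P L.
Proof.
move=> H0 H1.
have: forall n L, size L < n -> P L.
  elim=> // n IH [|x [|y [|z r]]] Hs; try (apply: H0; done).
  apply: H1; apply: IH; simpl in Hs; lia.
move=> H L; exact: (H (size L).+1).
Qed.

Lemma fblk_notin L v : v \notin L -> fblk L v = 3.
Proof.
elim/blk_ind: L => [[|x [|y [|z r]]] //|x y z r IH].
rewrite !inE !negb_or => /and4P [/negbTE vx /negbTE vy /negbTE vz Hr] /=.
by rewrite vx vy vz IH.
Qed.

Lemma fblk_val L v : [\/ fblk L v = 0, fblk L v = 3 | fblk L v = 4].
Proof.
elim/blk_ind: L => [[|x [|y [|z r]]] //|x y z r IH] /=; try by constructor 2.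
case: ifP => _; first by constructor 3.
case: ifP => _; first by constructor 1.
exact: IH.
Qed.

Lemma sum_eq1 x : \sum_(v : T) ((v == x) : nat) = 1.
Proof. by rewrite (bigD1 x) //= eqxx big1 // => v /negbTE ->. Qed.

Lemma sum_eq3 x : \sum_(v : T) ((v == x) * 3) = 3.
Proof. by rewrite (bigD1 x) //= eqxx big1 // => v /negbTE ->. Qed.

Lemma fblk_sum L : uniq L -> \sum_(v : T) fblk L v + 5 * (size L %/ 3) = 3 * #|T|.
Proof.
elim/blk_ind: L => [[|x [|y [|z r]]] // _ _|x y z r IH];
  try by rewrite (eq_bigr (fun _ => 3)) // sum_nat_const divn_small //= addn0 mulnC.
rewrite /= !inE !negb_or => /andP [/and3P [xy xz xr]] /andP [/andP [yz yr]] /andP [zr ur].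
have pw : forall v, fblk [:: x, y, z & r] v + (v == x) * 3 + (v == z) * 3
                    = fblk r v + (v == y).
  move=> v /=.
  case: (eqVneq v y) => [->|vy].
    rewrite eq_sym (negbTE xy) (negbTE yz) fblk_notin //.
  case: (eqVneq v x) => [->|vx].
    rewrite (negbTE xz) fblk_notin //.
  case: (eqVneq v z) => [->|vz].
    rewrite fblk_notin //.
  by rewrite /= !addn0.
have Hs : \sum_v (fblk [:: x, y, z & r] v + (v == x) * 3 + (v == z) * 3)
          = \sum_v (fblk r v + (v == y)) by apply: eq_bigr => v _; exact: pw.
rewrite !big_split !sum_eq3 sum_eq1 in Hs.
have := IH ur; rewrite /= (_ : (size r).+3 %/ 3 = (size r) %/ 3 + 1); last first.
  by rewrite -addn3 divnDr // divnn.
rewrite /= in Hs; lia.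
Qed.

Lemma fblk_dom L v : symmetric e -> sorted e L -> uniq L -> fblk L v = 0 ->
  exists w, e v w /\ fblk L w = 4.
Proof.
move=> esym; elim/blk_ind: L => [[|x [|y [|z r]]] //|x y z r IH].
rewrite /= !inE !negb_or => /andP [exy] /andP [eyz] pr
  /andP [/and3P [xy xz xr]] /andP [/andP [yz yr]] /andP [zr ur].
case: (eqVneq v y) => // vy.
case: (eqVneq v x) => [-> _|vx].
  by exists y; rewrite eqxx.
case: (eqVneq v z) => [-> _|vz] /=.
  by exists y; rewrite eqxx esym.
move=> H0; have [w [evw fw]] := IH (path_sorted pr) ur H0.
have wr : w \in r by apply: contraLR isT => /fblk_notin; rewrite fw.
exists w; split => //.
have -> : (w == y) = false by apply/negbTE; apply: contraNneq yr => <-.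
have -> : (w == x) = false by apply/negbTE; apply: contraNneq xr => <-.
have -> : (w == z) = false by apply/negbTE; apply: contraNneq zr => <-.
done.
Qed.

Lemma gamma_le h : is3RDF e h -> gamma3R e <= weight h.
Proof.
move=> Hh; rewrite /gamma3R.
elim: (index_enum _) (mem_index_enum h) => // x r IH.
rewrite big_cons inE => /orP [/eqP <- | /IH Hr].
  by rewrite Hh geq_minl.
by case: ifP => _ //; apply: leq_trans (geq_minr _ _) _.
Qed.

End P.

Theorem proposition23 (T : finType) (e : rel T) :
  simple_graph e -> connected_graph e -> 2 <= #|T| ->
  3 * gamma3R e + 5 * diam e <= 9 * #|T| + 7.
Proof.
move=> [esym eirr] conn T2.
have T0 : 0 < #|T| by lia.
have [a Ha] := eq_bigmax (fun x => \max_(y : T) dist e x y) T0.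
have [b Hb] := eq_bigmax (fun y => dist e a y) T0.
have Hd : diam e = dist e a b by rewrite /diam Ha Hb.
have /connectP [p pp pl] := conn a b.
move: pl; case: (shortenP pp) => p' pp' up' _ pl.
have Hdist : dist e a b <= size p'.
  rewrite /dist; case: leqP => // H.
  have := before_find 0 H.
  have Hf := find_size (fun n => has_walk e n a b) (iota 0 #|T|).
  rewrite size_iota in Hf.
  rewrite nth_iota; last by lia.
  rewrite add0n /has_walk => /negbT/negP []; apply/existsP; exists (in_tuple p').
  by rewrite /= pp' -pl eqxx.
set L := a :: p'.
have fl : forall v, fblk L v < 5 by move=> v; case: (fblk_val L v) => ->.
pose h := [ffun v => (inord (fblk L v) : 'I_5)].
have hE : forall v, (h v : nat) = fblk L v by move=> v; rewrite ffunE inordK.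
have H3 : is3RDF e h.
  apply/forallP => v; apply/implyP; rewrite hE => Hlt.
  have H0 : fblk L v = 0 by case: (fblk_val L v) => Hv; rewrite Hv in Hlt *.
  have [w [evw fw]] := @fblk_dom T e L v esym pp' up' H0.
  have win : w \in AN e h v by rewrite inE evw hE fw.
  rewrite (bigD1 w) // !hE fw H0 (cardsD1 w) win.
  have : \sum_(i in AN e h v | i != w) 1 <= \sum_(i in AN e h v | i != w) (h i : nat).
    apply: leq_sum => i /andP []; rewrite inE => /andP [_ ->] //.
  rewrite sum1dep_card.
  rewrite (_ : [set x in AN e h v | x != w] = AN e h v :\ w); last first.
    by apply/setP => x; rewrite !inE andbC.
  move=> Hle; apply: (@leq_trans (4 + \sum_(i in AN e h v | i != w) (h i : nat))).
    lia.
  by rewrite add0n.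
have Hw : weight h = \sum_v fblk L v by apply: eq_bigr => v _; rewrite hE.
have Hs : \sum_v fblk L v + 5 * (size L %/ 3) = 3 * #|T| := fblk_sum up'.
have Hg := gamma_le H3.
rewrite Hw in Hg; have sL : size L = (size p').+1 by [].
move: (divn_eq (size L) 3) (ltn_pmod (size L) (isT : 0 < 3)).
rewrite Hd; lia.
Qed.
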